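(* Let $\mathcal{X}\subseteq\mathbb{R}^{d_X}$, $\mathcal{Z}\subseteq\mathbb{R}^{d_Z}$, and let $\Theta=\Gamma\times\Delta\subseteq\mathbb{R}^{d_\gamma+d_\delta}$ be compact and non-empty. Let $X_1,\ldots,X_n$ and $Z_1,\ldots,Z_n$ be independent and identically distributed random vectors with the same distributions as random vectors $X$ (values in $\mathcal{X}$) and $Z$ (values in $\mathcal{Z}$), respectively. Let $G:\mathcal{Z}\times\Gamma\to\mathcal{X}$ and $D:\mathcal{X}\times\Delta\to(0,1)$ be functions, and define $F(x,z,\gamma,\delta)=\ln(D(x,\delta))+\ln(1-D(G(z,\gamma),\delta))$; assume $F(X,Z,\gamma,\delta)$ is measurable for every $(\gamma,\delta)\in\Theta$ and, with probability one, continuous in $(\gamma,\delta)$ on $\Theta$. Define $f(\gamma,\delta)=\mathbb{E}[F(X,Z,\gamma,\delta)]$, $\varphi(\gamma)=\sup_{\delta\in\Delta}f(\gamma,\delta)$, $V_0=\inf_{\gamma\in\Gamma}\varphi(\gamma)$, and $\Theta_0=\{(\gamma_0,\delta_0)\in\Theta: f(\gamma_0,\delta_0)=\varphi(\gamma_0)\text{ and }\varphi(\gamma_0)=V_0\}$. Define the sample quantities $\hat f_n(\gamma,\delta)=\frac1n\sum_{i=1}^nF(X_i,Z_i,\gamma,\delta)$, $\hat\varphi_n(\gamma)=\sup_{\delta\in\Delta}\hat f_n(\gamma,\delta)$, $\hat V_n=\inf_{\gamma\in\Gamma}\hat\varphi_n(\gamma)$, $\hat Q_n(\gamma,\delta)=\max\{\hat\varphi_n(\gamma)-\hat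 f_n(\gamma,\delta),\ \hat\varphi_n(\gamma)-\hat V_n\}$, and for a sequence of random variables $\tau_n$, $\hat\Theta_n(\tau_n)=\{\theta\in\Theta:\hat Q_n(\theta)\le\tau_n\}$. (a) Suppose $\sup_{\theta\in\Theta}|\hat f_n(\theta)-f(\theta)|\to 0$ in probability with $f$ continuous on $\Theta$, and suppose $\tau_n$ is a sequence of non-negative random variables with $\tau_n\to0$ in probability. Then $\sup_{\theta\in\hat\Theta_n(\tau_n)}d(\theta,\Theta_0)\to0$ in probability, and $\hat V_n\to V_0$ in probability. (b) Suppose $\sup_{\theta\in\Theta}|\hat f_n(\theta)-f(\theta)|\to 0$ in probability with $f$ continuous on $\Theta$ and moreover $\sup_{\theta\in\Theta}n^{1/2}|\hat f_n(\theta)-f(\theta)|=O_p(1)$, and suppose $\tau_n$ is a sequence of positive random variables with $\tau_n\to0$ in probability and $n^{-1/2}/\tau_n\to0$ in probability. Then $\sup_{\theta\in\Theta_0}d(\theta,\hat\Theta_n(\tau_n))\to0$ in probability, so that $d_H(\hat\Theta_n(\tau_n),\Theta_0)\to0$ in probability.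
   Context: $|\cdot|$ is the Euclidean norm; for a point $a$ and a set $B$, $d(a,B)=\inf_{b\in B}|a-b|$. For non-empty bounded sets $A,B$ the Hausdorff distance is $d_H(A,B)=\max\{\sup_{a\in A}d(a,B),\sup_{b\in B}d(b,A)\}$. $O_p(1)$ denotes a sequence of random variables bounded in probability. $\Theta_0$ is the set of solutions of the population minimax problem $\inf_{\gamma}\sup_{\delta}f(\gamma,\delta)$ and $\hat\Theta_n(\tau_n)$ the set of $\tau_n$-approximate solutions of the sample problem $\inf_\gamma\sup_\delta\hat f_n(\gamma,\delta)$. *)

(* Defs.v *)
From HB Require Import structures.
From mathcomp Require Import all_boot all_order all_algebra.
From mathcomp Require Import all_classical all_reals all_analysis.
Set Implicit Arguments. Unset Strict Implicit. Unset Printing Implicit Defensive.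
Import Order.TTheory GRing.Theory Num.Theory.
Import numFieldNormedType.Exports.
Local Open Scope classical_set_scope.
Local Open Scope ring_scope.

Definition outerP (R : realType) (d : measure_display) (Om : measurableType d)
  (P : probability Om R) (S : set Om) : \bar R :=
  ereal_inf [set P A | A in [set A | measurable A /\ S `<=` A]].

(* Y_n -> 0 in (outer) probability, for extended-real valued Y_n (upper
   deviations; two-sided convergence is expressed by applying it to |Y_n - c|):
   for every eps > 0, P*(Y_n > eps) -> 0. *)
Definition cvg_prob0 (R : realType) (d : measure_display) (Om : measurableType d)
  (P : probability Om R) (Y : nat -> Om -> \bar R) : Prop :=
  forall eps : R, 0 < eps -> forall eta : R, 0 < eta ->
    \forall n \near \oo, (outerP P [set w | (eps%:E < Y n w)%E] < eta%:E)%E.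

Definition bounded_in_prob (R : realType) (d : measure_display) (Om : measurableType d)
  (P : probability Om R) (Y : nat -> Om -> \bar R) : Prop :=
  forall eta : R, 0 < eta -> exists M : R,
    \forall n \near \oo, (outerP P [set w | (M%:E < `|Y n w|)%E] < eta%:E)%E.

(* Borel sigma-algebra on R^n (row vectors), generated by the coordinates. *)
Definition rvec_gen (R : realType) (n : nat) : set (set 'rV[R]_n) :=
  [set B | exists (i : 'I_n) (A : set R),
     measurable A /\ B = (fun v : 'rV[R]_n => v ord0 i) @^-1` A].
Definition rvec_measurable (R : realType) (n : nat) : set (set 'rV[R]_n) :=
  <<s @rvec_gen R n >>.

Definition random_vector (R : realType) (d : measure_display) (Om : measurableType d)
  (n : nat) (X : Om -> 'rV[R]_n) : Prop :=
  forall B, rvec_measurable B -> measurable (X @^-1` B).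

Definition same_law (R : realType) (d : measure_display) (Om : measurableType d)
  (P : probability Om R) (n : nat) (X1 X2 : Om -> 'rV[R]_n) : Prop :=
  forall B, rvec_measurable B -> P (X1 @^-1` B) = P (X2 @^-1` B).

Definition mutually_independent (R : realType) (d : measure_display)
  (Om : measurableType d) (P : probability Om R) (m k : nat)
  (X : nat -> Om -> 'rV[R]_m) (Z : nat -> Om -> 'rV[R]_k) : Prop :=
  forall (I J : seq nat) (A : nat -> set 'rV[R]_m) (B : nat -> set 'rV[R]_k),
    uniq I -> uniq J ->
    (forall i, rvec_measurable (A i)) -> (forall j, rvec_measurable (B j)) ->
    P ((\bigcap_(i in [set` I]) (X i @^-1` A i))
         `&` (\bigcap_(j in [set` J]) (Z j @^-1` B j)))
    = ((\prod_(i <- I) P (X i @^-1` A i)) * (\prod_(j <- J) P (Z j @^-1` B j)))%E.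

Definition eucl_dist (R : realType) (a b : nat) (t u : 'rV[R]_a * 'rV[R]_b) : R :=
  Num.sqrt (\sum_(i < a) (t.1 ord0 i - u.1 ord0 i) ^+ 2
          + \sum_(j < b) (t.2 ord0 j - u.2 ord0 j) ^+ 2).

(* d(t, B) = inf_{u in B} |t - u|  (= +oo if B is empty) *)
Definition dist_set (R : realType) (a b : nat) (t : 'rV[R]_a * 'rV[R]_b)
  (B : set ('rV[R]_a * 'rV[R]_b)) : \bar R :=
  ereal_inf [set (eucl_dist t u)%:E | u in B].

Definition excess (R : realType) (a b : nat) (A B : set ('rV[R]_a * 'rV[R]_b))
  : \bar R := ereal_sup [set dist_set t B | t in A].

Definition hausdorff (R : realType) (a b : nat) (A B : set ('rV[R]_a * 'rV[R]_b))
  : \bar R := maxe (excess A B) (excess B A).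

Definition Fgan (R : realType) (dX dZ dg dd : nat)
  (G : 'rV[R]_dZ -> 'rV[R]_dg -> 'rV[R]_dX) (D : 'rV[R]_dX -> 'rV[R]_dd -> R)
  (x : 'rV[R]_dX) (z : 'rV[R]_dZ) (g : 'rV[R]_dg) (dl : 'rV[R]_dd) : R :=
  ln (D x dl) + ln (1 - D (G z g) dl).

Definition phi0 (R : realType) (dg dd : nat) (f : 'rV[R]_dg * 'rV[R]_dd -> R)
  (Delta : set 'rV[R]_dd) (g : 'rV[R]_dg) : \bar R :=
  ereal_sup [set (f (g, dl))%:E | dl in Delta].

Definition V0 (R : realType) (dg dd : nat) (f : 'rV[R]_dg * 'rV[R]_dd -> R)
  (Gamma : set 'rV[R]_dg) (Delta : set 'rV[R]_dd) : \bar R :=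
  ereal_inf [set phi0 f Delta g | g in Gamma].

Definition Theta0 (R : realType) (dg dd : nat) (f : 'rV[R]_dg * 'rV[R]_dd -> R)
  (Gamma : set 'rV[R]_dg) (Delta : set 'rV[R]_dd) : set ('rV[R]_dg * 'rV[R]_dd) :=
  [set t | (Gamma `*` Delta) t /\ (f t)%:E = phi0 f Delta t.1
                              /\ phi0 f Delta t.1 = V0 f Gamma Delta].

(* sample quantities; the sample is X_0, ..., X_{n-1}, Z_0, ..., Z_{n-1} *)
Definition fhat (R : realType) (Om : Type) (dX dZ dg dd : nat)
  (F : 'rV[R]_dX -> 'rV[R]_dZ -> 'rV[R]_dg -> 'rV[R]_dd -> R)
  (X : nat -> Om -> 'rV[R]_dX) (Z : nat -> Om -> 'rV[R]_dZ)
  (n : nat) (w : Om) (t : 'rV[R]_dg * 'rV[R]_dd) : R :=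
  n%:R^-1 * \sum_(i < n) F (X i w) (Z i w) t.1 t.2.

Definition phihat (R : realType) (Om : Type) (dX dZ dg dd : nat)
  (F : 'rV[R]_dX -> 'rV[R]_dZ -> 'rV[R]_dg -> 'rV[R]_dd -> R)
  (X : nat -> Om -> 'rV[R]_dX) (Z : nat -> Om -> 'rV[R]_dZ)
  (Delta : set 'rV[R]_dd) (n : nat) (w : Om) (g : 'rV[R]_dg) : \bar R :=
  ereal_sup [set (fhat F X Z n w (g, dl))%:E | dl in Delta].

Definition Vhat (R : realType) (Om : Type) (dX dZ dg dd : nat)
  (F : 'rV[R]_dX -> 'rV[R]_dZ -> 'rV[R]_dg -> 'rV[R]_dd -> R)
  (X : nat -> Om -> 'rV[R]_dX) (Z : nat -> Om -> 'rV[R]_dZ)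
  (Gamma : set 'rV[R]_dg) (Delta : set 'rV[R]_dd) (n : nat) (w : Om) : \bar R :=
  ereal_inf [set phihat F X Z Delta n w g | g in Gamma].

Definition Qhat (R : realType) (Om : Type) (dX dZ dg dd : nat)
  (F : 'rV[R]_dX -> 'rV[R]_dZ -> 'rV[R]_dg -> 'rV[R]_dd -> R)
  (X : nat -> Om -> 'rV[R]_dX) (Z : nat -> Om -> 'rV[R]_dZ)
  (Gamma : set 'rV[R]_dg) (Delta : set 'rV[R]_dd) (n : nat) (w : Om)
  (t : 'rV[R]_dg * 'rV[R]_dd) : \bar R :=
  maxe (phihat F X Z Delta n w t.1 - (fhat F X Z n w t)%:E)%E
       (phihat F X Z Delta n w t.1 - Vhat F X Z Gamma Delta n w)%E.

Definition Thetahat (R : realType) (Om : Type) (dX dZ dg dd : nat)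
  (F : 'rV[R]_dX -> 'rV[R]_dZ -> 'rV[R]_dg -> 'rV[R]_dd -> R)
  (X : nat -> Om -> 'rV[R]_dX) (Z : nat -> Om -> 'rV[R]_dZ)
  (Gamma : set 'rV[R]_dg) (Delta : set 'rV[R]_dd) (tau : nat -> Om -> R)
  (n : nat) (w : Om) : set ('rV[R]_dg * 'rV[R]_dd) :=
  [set t | (Gamma `*` Delta) t /\ (Qhat F X Z Gamma Delta n w t <= (tau n w)%:E)%E].

Definition sup_dev (R : realType) (Om : Type) (dX dZ dg dd : nat)
  (F : 'rV[R]_dX -> 'rV[R]_dZ -> 'rV[R]_dg -> 'rV[R]_dd -> R)
  (X : nat -> Om -> 'rV[R]_dX) (Z : nat -> Om -> 'rV[R]_dZ)
  (f : 'rV[R]_dg * 'rV[R]_dd -> R)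
  (Gamma : set 'rV[R]_dg) (Delta : set 'rV[R]_dd) (n : nat) (w : Om) : \bar R :=
  ereal_sup [set (`|fhat F X Z n w t - f t|)%:E | t in Gamma `*` Delta].

(* Main.v *)
Require Import Defs.
From HB Require Import structures.
From mathcomp Require Import all_boot all_order all_algebra.
From mathcomp Require Import all_classical all_reals all_analysis.
From mathcomp Require Import ring lra.
Import Order.TTheory GRing.Theory Num.Theory.
Import numFieldNormedType.Exports.
Local Open Scope classical_set_scope.
Local Open Scope ring_scope.
Local Open Scope ereal_scope.

Lemma esup_fin (R : realType) (U : Type) (S : set U) (h : U -> R) (B : R) (s : \bar R) :
  s = ereal_sup [set (h x)%:E | x in S] ->
  S !=set0 -> (forall x, S x -> h x <= B)%R ->
  [/\ s = (fine s)%:E, (forall x, S x -> h x <= fine s)%R,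
      (forall M, (forall x, S x -> h x <= M)%R -> (fine s <= M)%R) &
      (forall e, (0 < e)%R -> exists2 x, S x & (fine s - e < h x)%R)].
Proof.
move=> Hs [x0 Sx0] hB.
have ub : s <= B%:E.
  by rewrite Hs; apply: ge_ereal_sup => _ [x Sx <-]; rewrite lee_fin hB.
have lb : (h x0)%:E <= s.
  by rewrite Hs; apply: ereal_sup_ubound; exists x0.
case: s Hs ub lb => [r| |] // Hs ub lb /=; split => //.
- move=> x Sx; rewrite -lee_fin Hs; apply: ereal_sup_ubound; by exists x.
- move=> M HM; rewrite -lee_fin Hs; apply: ge_ereal_sup => _ [x Sx <-].
  by rewrite lee_fin HM.
- move=> e e0; have : (r - e)%:E < ereal_sup [set (h x)%:E | x in S].
    by rewrite -Hs lte_fin ltrBlDr ltrDl.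
  by case/ereal_sup_gt => _ [x Sx <-]; rewrite lte_fin => ?; exists x.
Qed.

Lemma einf_fin (R : realType) (U : Type) (S : set U) (h : U -> R) (B : R) (s : \bar R) :
  s = ereal_inf [set (h x)%:E | x in S] ->
  S !=set0 -> (forall x, S x -> B <= h x)%R ->
  [/\ s = (fine s)%:E, (forall x, S x -> fine s <= h x)%R,
      (forall M, (forall x, S x -> M <= h x)%R -> (M <= fine s)%R) &
      (forall e, (0 < e)%R -> exists2 x, S x & (h x < fine s + e)%R)].
Proof.
move=> Hs [x0 Sx0] hB.
have ub : B%:E <= s.
  by rewrite Hs; apply: le_ereal_inf_tmp => _ [x Sx <-]; rewrite lee_fin hB.
have lb : s <= (h x0)%:E.
  by rewrite Hs; apply: ereal_inf_lbound; exists x0.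
case: s Hs ub lb => [r| |] // Hs ub lb /=; split => //.
- move=> x Sx; rewrite -lee_fin Hs; apply: ereal_inf_lbound; by exists x.
- move=> M HM; rewrite -lee_fin Hs; apply: le_ereal_inf_tmp => _ [x Sx <-].
  by rewrite lee_fin HM.
- move=> e e0; have : ereal_inf [set (h x)%:E | x in S] < (r + e)%:E.
    by rewrite -Hs lte_fin ltrDl.
  by case/ereal_inf_lt => _ [x Sx <-]; rewrite lte_fin => ?; exists x.
Qed.

Section Outer.
Variables (R : realType) (d : measure_display) (Om : measurableType d) (P : probability Om R).

Lemma outer_le (S A : set Om) : measurable A -> S `<=` A -> outerP P S <= P A.
Proof. by move=> mA SA; apply: ereal_inf_lbound; exists A. Qed.

Lemma outer_lt (S : set Om) a : outerP P S < a ->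
  exists2 A, measurable A /\ S `<=` A & P A < a.
Proof. by case/ereal_inf_lt => _ [A HA <-]; exists A. Qed.

Lemma outer_mono (S S1 : set Om) a : S `<=` S1 -> outerP P S1 < a -> outerP P S < a.
Proof.
move=> SS1 /outer_lt [A [mA S1A] PA]; apply: le_lt_trans PA.
by apply: outer_le => // x /SS1 /S1A.
Qed.

Lemma outer_union (S S1 S2 : set Om) (a b : R) : S `<=` S1 `|` S2 ->
  outerP P S1 < a%:E -> outerP P S2 < b%:E -> outerP P S < (a + b)%:E.
Proof.
move=> SS /outer_lt [A1 [m1 s1] p1] /outer_lt [A2 [m2 s2] p2].
apply: (@le_lt_trans _ _ (P (A1 `|` A2))).
  apply: outer_le; first exact: measurableU.
  by move=> x /SS [/s1|/s2] h; [left|right].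
apply: le_lt_trans (measureU2 _ m1 m2) _.
by rewrite EFinD; apply: lteD.
Qed.
End Outer.

Lemma normleP (R : realType) (x e : R) : (`|x| <= e)%R <-> ((- e <= x)%R /\ (x <= e)%R).
Proof. by rewrite ler_norml; split => [/andP[]|[-> ->]]. Qed.

Section Det.
Variables (R : realType) (dg dd : nat) (Gamma : set 'rV[R]_dg) (Delta : set 'rV[R]_dd).
Local Notation T := (Gamma `*` Delta).
Hypothesis HTn : T !=set0.

Lemma Gne : Gamma !=set0. Proof. by case: HTn => -[g dl] [Gg _]; exists g. Qed.
Lemma Dne : Delta !=set0. Proof. by case: HTn => -[g dl] [_ Dl]; exists dl. Qed.

Definition ph (h : 'rV[R]_dg * 'rV[R]_dd -> R) g := fine (phi0 h Delta g).
Definition vv (h : 'rV[R]_dg * 'rV[R]_dd -> R) := fine (V0 h Gamma Delta).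

Lemma phiP h B g : (forall t, T t -> `|h t| <= B)%R -> Gamma g ->
 [/\ phi0 h Delta g = (ph h g)%:E, (forall dl, Delta dl -> h (g,dl) <= ph h g)%R,
     (forall M, (forall dl, Delta dl -> h (g,dl) <= M)%R -> (ph h g <= M)%R),
     (forall e, (0<e)%R -> exists2 dl, Delta dl & (ph h g - e < h (g,dl))%R) &
     (`|ph h g| <= B)%R].
Proof.
move=> hB Gg.
have hB' : forall dl, Delta dl -> (- B <= h (g, dl))%R /\ (h (g, dl) <= B)%R.
  by move=> dl Ddl; apply/normleP; apply: hB.
have [E1 E2 E3 E4] := @esup_fin _ _ Delta (fun dl => h (g,dl)) B _ (erefl (phi0 h Delta g)) Dne
   (fun dl Ddl => (hB' dl Ddl).2).
split => //; apply/normleP; split.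
  by case: Dne => dl Ddl; apply: le_trans (hB' _ Ddl).1 (E2 _ Ddl).
by apply: E3 => dl Ddl; case: (hB' _ Ddl).
Qed.

Lemma vP h B : (forall t, T t -> `|h t| <= B)%R ->
 [/\ V0 h Gamma Delta = (vv h)%:E, (forall g, Gamma g -> vv h <= ph h g)%R,
     (forall M, (forall g, Gamma g -> M <= ph h g)%R -> (M <= vv h)%R) &
     (forall e, (0<e)%R -> exists2 g, Gamma g & (ph h g < vv h + e)%R)].
Proof.
move=> hB.
have E : V0 h Gamma Delta = ereal_inf [set (ph h g)%:E | g in Gamma].
  by rewrite /V0; congr ereal_inf; apply: eq_imagel => g Gg; case: (phiP _ _ _ hB Gg).
have lb : forall g, Gamma g -> (- B <= ph h g)%R.
  by move=> g Gg; case: (phiP _ _ _ hB Gg) => _ _ _ _ /normleP[].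
have [E1 E2 E3 E4] := @einf_fin _ _ Gamma (ph h) (- B) _ E Gne lb.
by split.
Qed.

Variable f : 'rV[R]_dg * 'rV[R]_dd -> R.

Lemma approx h eta B : (forall t, T t -> `|f t| <= B)%R ->
  (forall t, T t -> `|h t - f t| <= eta)%R ->
  [/\ (forall t, T t -> `|h t| <= B + eta)%R,
      (forall g, Gamma g -> `|ph h g - ph f g| <= eta)%R &
      (`|vv h - vv f| <= eta)%R].
Proof.
move=> fB hf.
have hB : forall t, T t -> (`|h t| <= B + eta)%R.
  move=> t Tt; have /normleP[? ?] := fB t Tt; have /normleP[? ?] := hf t Tt.
  apply/normleP; split; lra.
have php : forall g, Gamma g -> (`|ph h g - ph f g| <= eta)%R.
  move=> g Gg.
  have [_ h2 h3 _ _] := phiP _ _ _ hB Gg; have [_ f2 f3 _ _] := phiP _ _ _ fB Gg.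
  apply/normleP; split.
  - suff : (ph f g <= ph h g + eta)%R by lra.
    apply: f3 => dl Ddl; have /normleP[? ?] := hf (g, dl) (conj Gg Ddl).
    have := h2 dl Ddl; lra.
  - suff : (ph h g <= ph f g + eta)%R by lra.
    apply: h3 => dl Ddl; have /normleP[? ?] := hf (g, dl) (conj Gg Ddl).
    have := f2 dl Ddl; lra.
split => //.
have [_ h2 h3 _] := vP _ _ hB; have [_ f2 f3 _] := vP _ _ fB.
apply/normleP; split.
- suff : (vv f - eta <= vv h)%R by lra.
  apply: h3 => g Gg; have /normleP[? ?] := php g Gg; have := f2 g Gg; lra.
- suff : (vv h - eta <= vv f)%R by lra.
  apply: f3 => g Gg; have /normleP[? ?] := php g Gg; have := h2 g Gg; lra.
Qed.


Hypotheses (HTc : compact T) (Hfc : {within T, continuous f}).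

Lemma fbound : exists B, forall t, T t -> (`|f t| <= B)%R.
Proof.
have := compact_bounded (continuous_compact Hfc HTc).
rewrite /bounded_set /= => -[M [Mr HM]].
exists (M + 1)%R => t Tt; apply: (HM (M + 1)%R); [by rewrite ltrDl | by exists t].
Qed.

Lemma cont_at t e : T t -> (0 < e)%R -> exists2 r, (0 < r)%R &
  forall u, T u -> ball t r u -> (`|f t - f u| < e)%R.
Proof.
move=> Tt e0.
have := (subspace_continuousP T f).1 Hfc t Tt.
move/cvgrPdist_lt => /(_ e e0) /nbhs_ballP [r r0 Hr].
by exists r => // u Tu btu; exact: (Hr u btu Tu).
Qed.


Lemma eucl_small eps : (0 < eps)%R -> exists2 r, (0 < r)%R &
  forall t u : 'rV[R]_dg * 'rV[R]_dd, ball t r u -> (eucl_dist u t < eps)%R.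
Proof.
move=> e0; pose N : R := (dg + dd)%:R.
have N0 : (0 <= N)%R by rewrite /N ler0n.
pose r := (eps / (N + 1))%R.
have r0 : (0 < r)%R by apply: divr_gt0 => //; lra.
have hr : ((N + 1) * r = eps)%R by rewrite /r mulrC divfK //; apply: lt0r_neq0; lra.
exists r => // t u [[_ b1] [_ b2]].
have sq : forall x y : R, ball x r y -> ((y - x) ^+ 2 <= r ^+ 2)%R.
  by move=> x y; rewrite /ball /= ltr_norml => /andP[h1 h2]; nra.
have S1 : (\sum_(i < dg) (u.1 ord0 i - t.1 ord0 i) ^+ 2 <= dg%:R * r ^+ 2)%R.
  apply: (@le_trans _ _ (\sum_(i < dg) r ^+ 2)%R).
    by apply: ler_sum => i _; apply: sq; apply: b1.
  by rewrite sumr_const card_ord mulr_natl.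
have S2 : (\sum_(i < dd) (u.2 ord0 i - t.2 ord0 i) ^+ 2 <= dd%:R * r ^+ 2)%R.
  apply: (@le_trans _ _ (\sum_(i < dd) r ^+ 2)%R).
    by apply: ler_sum => i _; apply: sq; apply: b2.
  by rewrite sumr_const card_ord mulr_natl.
rewrite /eucl_dist -(ger0_norm (ltW e0)) -sqrtr_sqr ltr_sqrt; last exact: exprn_gt0.
have E : (N * r ^+ 2 = dg%:R * r ^+ 2 + dd%:R * r ^+ 2)%R by rewrite /N natrD mulrDl.
have : (N * r ^+ 2 < eps ^+ 2)%R.
  clearbody r; rewrite -hr exprMn; have r2 : (0 < r ^+ 2)%R by exact: exprn_gt0.
  have : (N < (N + 1) ^+ 2)%R by nra.
  by move=> h; rewrite ltr_pM2r.
lra.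
Qed.


Lemma ge_min_l (r1 r2 : R) : (Num.min r1 r2 <= r1)%R.
Proof. by rewrite ge_min lexx. Qed.
Lemma ge_min_r (r1 r2 : R) : (Num.min r1 r2 <= r2)%R.
Proof. by rewrite ge_min lexx orbT. Qed.

Definition Qf t : R := Num.max (ph f t.1 - f t)%R (ph f t.1 - vv f)%R.

Lemma Q_zero t : T t -> (Qf t <= 0)%R -> Theta0 f Gamma Delta t.
Proof.
case: t => g dl [Gg Ddl]; have [B hB] := fbound.
have [E1 h2 _ _ _] := phiP _ _ _ hB Gg; have [V1 v2 _ _] := vP _ _ hB.
rewrite /Qf /= ge_max => /andP[q1 q2].
have a := h2 dl Ddl; have b := v2 g Gg.
split; first by [].
rewrite /= E1 V1; split; congr EFin; lra.
Qed.

Lemma Q_lsc t e : T t -> (0 < e)%R -> exists2 r, (0 < r)%R &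
  forall u, T u -> ball t r u -> (Qf t - e < Qf u)%R.
Proof.
case: t => g dl [Gg Ddl] e0; have [B hB] := fbound.
have [_ _ _ h4 _] := phiP _ _ _ hB Gg.
have [dl' Ddl' /= hdl'] := h4 (e / 2)%R ltac:(lra).
have [r1 r10 H1] := @cont_at (g, dl') (e / 4)%R (conj Gg Ddl') ltac:(lra).
have [r2 r20 H2] := @cont_at (g, dl) (e / 4)%R (conj Gg Ddl) ltac:(lra).
exists (Num.min r1 r2); first by rewrite lt_min r10 r20.
move=> [g' dl''] /= [Gg' Ddl''] [/= bg bd].
have b1 : ball (g, dl') r1 (g', dl').
  split; last exact: ballxx.
  by apply: (le_ball (ge_min_l r1 r2)) bg. 
have b2 : ball (g, dl) r2 (g', dl'').
  by split; apply: (le_ball (ge_min_r r1 r2)); [exact: bg | exact: bd].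
have := H1 (g', dl') (conj Gg' Ddl') b1; rewrite ltr_norml => /andP[c1 c1'].
have := H2 (g', dl'') (conj Gg' Ddl'') b2; rewrite ltr_norml => /andP[c2 c2'].
have [_ h2' _ _ _] := phiP _ _ _ hB Gg'.
have c3 := h2' dl' Ddl'.
rewrite /Qf /= !maxEle.
case: (lerP (ph f g - f (g, dl)) (ph f g - vv f)) => ?;
  case: (lerP (ph f g' - f (g', dl'')) (ph f g' - vv f)) => ?; lra.
Qed.


Lemma seq_min (I : eqType) (g : I -> R) (s : seq I) :
  (forall i, i \in s -> (0 < g i)%R) ->
  exists2 m, (0 < m)%R & forall i, i \in s -> (m <= g i)%R.
Proof.
elim: s => [|a s IH] H; first by exists 1%R.
have [m m0 hm] : exists2 m, (0 < m)%R & forall i, i \in s -> (m <= g i)%R.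
  by apply: IH => i iS; apply: H; rewrite inE iS orbT.
exists (Num.min (g a) m).
  by rewrite lt_min m0 H // inE eqxx.
move=> i; rewrite inE => /orP[/eqP->|iS]; first by rewrite ge_min lexx.
by rewrite ge_min hm ?orbT.
Qed.

Lemma key eps : (0 < eps)%R -> exists2 del, (0 < del)%R &
  forall t, T t -> (Qf t < del)%R -> dist_set t (Theta0 f Gamma Delta) < eps%:E.
Proof.
move=> e0.
have [r0 r00 Hr0] := eucl_small eps e0.
have NC := (near_covering_withinP T).2 ((compact_near_coveringP T).1 HTc).
have Hn : \forall del \near 0%R^'+, T `<=` (fun t => (Qf t < del)%R ->
    dist_set t (Theta0 f Gamma Delta) < eps%:E).
  apply: (NC R (0%R^'+) (fun del t => (Qf t < del)%R ->
    dist_set t (Theta0 f Gamma Delta) < eps%:E)).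
  move=> t Tt; case: (leP (Qf t) 0%R) => hq.
  + exists (ball t r0, setT); first by split; [exact: nbhsx_ballx | exact: filterT].
    move=> [u del] /= [btu _] Tu _.
    apply: (@le_lt_trans _ _ (eucl_dist u t)%:E); last by rewrite lte_fin; apply: Hr0.
    by apply: ereal_inf_lbound; exists t => //; apply: Q_zero.
  + have [r r1 Hr] := Q_lsc t (Qf t / 2)%R Tt ltac:(lra).
    exists (ball t r, [set d : R | (d < Qf t / 2)%R]).
      split; first exact: nbhsx_ballx.
      by apply: nbhs_right_lt; lra.
    move=> [u del] /= [btu hd] Tu hu; have := Hr u Tu btu => h; exfalso; lra.
have [del [d0 Hd]] := filter_ex (filterI (nbhs_right_gt 0%R) Hn).
by exists del => // t Tt; apply: Hd.
Qed.


Definition sdev (fh : 'rV[R]_dg * 'rV[R]_dd -> R) :=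
  ereal_sup [set (`|fh t - f t|)%:E | t in T].

Lemma sdev_close fh eta : sdev fh <= eta%:E -> forall t, T t -> (`|fh t - f t| <= eta)%R.
Proof.
move=> H t Tt; rewrite -lee_fin; apply: le_trans H.
by apply: ereal_sup_ubound; exists t.
Qed.

Lemma det_V fh eta : sdev fh <= eta%:E ->
  `|V0 fh Gamma Delta - V0 f Gamma Delta| <= eta%:E.
Proof.
move=> H; have [B hB] := fbound.
have [hB' _ hv] := approx _ _ _ hB (sdev_close _ _ H).
have [V1 _ _ _] := vP _ _ hB'; have [V2 _ _ _] := vP _ _ hB.
by rewrite V1 V2 -EFinB /= lee_fin.
Qed.

Lemma det_Qhat fh eta tau t : sdev fh <= eta%:E -> T t ->
  (maxe (phi0 fh Delta t.1 - (fh t)%:E) (phi0 fh Delta t.1 - V0 fh Gamma Delta) <= tau%:E)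
  <-> (Num.max (ph fh t.1 - fh t)%R (ph fh t.1 - vv fh)%R <= tau)%R.
Proof.
move=> H Tt; have [B hB] := fbound.
have [hB' _ _] := approx _ _ _ hB (sdev_close _ _ H).
have [E1 _ _ _ _] := phiP _ _ t.1 hB' (proj1 Tt); have [V1 _ _ _] := vP _ _ hB'.
rewrite E1 V1 -!EFinB !maxEle lee_fin.
by case: ifP => _; rewrite lee_fin.
Qed.

Lemma eucl0 (t : 'rV[R]_dg * 'rV[R]_dd) : eucl_dist t t = 0%R.
Proof.
by rewrite /eucl_dist !big1 ?addr0 ?sqrtr0 // => i _; rewrite subrr expr2 mul0r.
Qed.

Lemma det_a1 fh eta tau eps del :
  (forall t, T t -> (Qf t < del)%R -> dist_set t (Theta0 f Gamma Delta) < eps%:E) ->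
  sdev fh <= eta%:E -> (tau <= eta)%R -> (3 * eta < del)%R ->
  excess [set t | T t /\ maxe (phi0 fh Delta t.1 - (fh t)%:E)
                     (phi0 fh Delta t.1 - V0 fh Gamma Delta) <= tau%:E]
         (Theta0 f Gamma Delta) <= eps%:E.
Proof.
move=> Hkey H te ed; apply: ge_ereal_sup => _ [t [Tt Hq] <-].
move: Hq; rewrite (det_Qhat _ _ _ _ H Tt) ge_max => /andP[q1 q2].
apply: ltW; apply: Hkey => //.
have [B hB] := fbound.
have [_ hp hv] := approx _ _ _ hB (sdev_close _ _ H).
have /normleP[? ?] := hp _ (proj1 Tt).
have /normleP[? ?] := sdev_close _ _ H _ Tt.
move/normleP: hv => [? ?].
rewrite /Qf gt_max; apply/andP; split; lra.
Qed.

Lemma det_b1 fh eta tau :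
  sdev fh <= eta%:E -> (2 * eta <= tau)%R ->
  excess (Theta0 f Gamma Delta)
     [set t | T t /\ maxe (phi0 fh Delta t.1 - (fh t)%:E)
                     (phi0 fh Delta t.1 - V0 fh Gamma Delta) <= tau%:E] <= 0%:E.
Proof.
move=> H te; apply: ge_ereal_sup => _ [t [Tt [Ht1 Ht2]] <-].
apply: (@le_trans _ _ (eucl_dist t t)%:E); last by rewrite eucl0.
apply: ereal_inf_lbound; exists t => //; split => //.
rewrite (det_Qhat _ _ _ _ H Tt) ge_max.
have [B hB] := fbound.
have [_ hp hv] := approx _ _ _ hB (sdev_close _ _ H).
have [E1 _ _ _ _] := phiP _ _ t.1 hB (proj1 Tt); have [V1 _ _ _] := vP _ _ hB.
move: Ht1 Ht2; rewrite E1 V1 => -[e1] -[e2].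
have /normleP[? ?] := hp _ (proj1 Tt).
have /normleP[? ?] := sdev_close _ _ H _ Tt.
move/normleP: hv => [? ?].
apply/andP; split; lra.
Qed.

End Det.

Arguments outer_union {R d Om P S S1 S2 a b}.
Arguments outer_mono {R d Om P S S1 a}.
Arguments key {R dg dd Gamma Delta} HTn {f} HTc Hfc {eps}.
Arguments det_a1 {R dg dd Gamma Delta} HTn {f} HTc Hfc {fh eta tau eps del}.
Arguments det_b1 {R dg dd Gamma Delta} HTn {f} HTc Hfc {fh eta tau}.
Arguments det_V {R dg dd Gamma Delta} HTn {f} HTc Hfc {fh eta}.

Lemma aux_s (R : realType) (s : \bar R) (q M M' : R) : (0 < q)%R -> 0 <= s -> (M <= M')%R ->
  `|q%:E * s| <= M%:E -> s <= (M' * q^-1)%:E.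
Proof.
move=> q0; case: s => [r| |] //= s0 MM'.
- rewrite !lee_fin => h.
  rewrite ler_pdivlMr //; apply: le_trans MM'; apply: le_trans h.
  by rewrite mulrC; exact: ler_norm.
- by rewrite mulry gtr0_sg // mul1e.
Qed.

Lemma aux_r (R : realType) (a tau M' : R) : (0 < tau)%R -> (0 < M')%R ->
  `|(a / tau)%:E| <= (1 / (2 * M'))%:E -> (2 * (M' * a) <= tau)%R.
Proof.
move=> t0 m0; rewrite /= lee_fin => h.
have h1 : (a / tau <= 1 / (2 * M'))%R := le_trans (ler_norm _) h.
rewrite ler_pdivrMr // in h1.
have h2 : (0 <= 2 * M')%R by lra.
have := ler_wpM2l h2 h1.
have -> : (2 * M' * (1 / (2 * M') * tau) = tau)%R.
  by field; apply: lt0r_neq0; lra.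
by rewrite mulrA.
Qed.

Local Close Scope ereal_scope.

Theorem theorem1
  (R : realType) (d : measure_display) (Om : measurableType d)
  (P : probability Om R)
  (dX dZ dg dd : nat)
  (Xset : set 'rV[R]_dX) (Zset : set 'rV[R]_dZ)
  (Gamma : set 'rV[R]_dg) (Delta : set 'rV[R]_dd)
  (X : Om -> 'rV[R]_dX) (Z : Om -> 'rV[R]_dZ)
  (Xs : nat -> Om -> 'rV[R]_dX) (Zs : nat -> Om -> 'rV[R]_dZ)
  (G : 'rV[R]_dZ -> 'rV[R]_dg -> 'rV[R]_dX)
  (D : 'rV[R]_dX -> 'rV[R]_dd -> R)
  (f : 'rV[R]_dg * 'rV[R]_dd -> R)
  (* Theta = Gamma x Delta compact and non-empty *)
  (HTc : compact (Gamma `*` Delta)) (HTn : (Gamma `*` Delta) !=set0)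
  (* X, Z random vectors with values in Xset, Zset *)
  (HXrv : random_vector X) (HZrv : random_vector Z)
  (HXv : forall w, Xset (X w)) (HZv : forall w, Zset (Z w))
  (* X_i, Z_i: random vectors, identically distributed as X, resp. Z,
     and mutually independent *)
  (HXsrv : forall i, random_vector (Xs i)) (HZsrv : forall i, random_vector (Zs i))
  (HXsv : forall i w, Xset (Xs i w)) (HZsv : forall i w, Zset (Zs i w))
  (HXlaw : forall i, same_law P (Xs i) X) (HZlaw : forall i, same_law P (Zs i) Z)
  (Hind : mutually_independent P Xs Zs)
  (* G : Zset x Gamma -> Xset,  D : Xset x Delta -> (0,1) *)
  (HG : forall z g, Zset z -> Gamma g -> Xset (G z g))
  (HD : forall x dl, Xset x -> Delta dl -> 0 < D x dl < 1)
  (* F(X,Z,theta) measurable for every theta, a.s. continuous on Theta *)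
  (HFmeas : forall g dl, Gamma g -> Delta dl ->
     measurable_fun setT (fun w => Fgan G D (X w) (Z w) g dl))
  (HFcont : {ae P, forall w,
     {within Gamma `*` Delta,
        continuous (fun t : 'rV[R]_dg * 'rV[R]_dd => Fgan G D (X w) (Z w) t.1 t.2)}})
  (* f(theta) = E[F(X,Z,theta)] (finite) *)
  (Hf : forall g dl, Gamma g -> Delta dl ->
     (\int[P]_w (Fgan G D (X w) (Z w) g dl)%:E)%E = (f (g, dl))%:E) :
  (* (a) *)
  (forall tau : nat -> Om -> R,
     cvg_prob0 P (sup_dev (Fgan G D) Xs Zs f Gamma Delta) ->
     {within Gamma `*` Delta, continuous f} ->
     (forall n, measurable_fun setT (tau n)) ->
     (forall n w, 0 <= tau n w) ->
     cvg_prob0 P (fun n w => `|(tau n w)%:E|%E) ->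
     cvg_prob0 P (fun n w =>
        excess (Thetahat (Fgan G D) Xs Zs Gamma Delta tau n w) (Theta0 f Gamma Delta))
     /\ cvg_prob0 P (fun n w =>
        `|Vhat (Fgan G D) Xs Zs Gamma Delta n w - V0 f Gamma Delta|%E))
  /\
  (* (b) *)
  (forall tau : nat -> Om -> R,
     cvg_prob0 P (sup_dev (Fgan G D) Xs Zs f Gamma Delta) ->
     {within Gamma `*` Delta, continuous f} ->
     bounded_in_prob P (fun n w =>
        ((Num.sqrt n%:R)%:E * sup_dev (Fgan G D) Xs Zs f Gamma Delta n w)%E) ->
     (forall n, measurable_fun setT (tau n)) ->
     (forall n w, 0 < tau n w) ->
     cvg_prob0 P (fun n w => `|(tau n w)%:E|%E) ->
     cvg_prob0 P (fun n w => `|((Num.sqrt n%:R)^-1 / tau n w)%:E|%E) ->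
     cvg_prob0 P (fun n w =>
        excess (Theta0 f Gamma Delta) (Thetahat (Fgan G D) Xs Zs Gamma Delta tau n w))
     /\ cvg_prob0 P (fun n w =>
        hausdorff (Thetahat (Fgan G D) Xs Zs Gamma Delta tau n w) (Theta0 f Gamma Delta))).
Proof.
have partA1 : forall tau : nat -> Om -> R,
  cvg_prob0 P (sup_dev (Fgan G D) Xs Zs f Gamma Delta) ->
  {within Gamma `*` Delta, continuous f} ->
  cvg_prob0 P (fun n w => `|(tau n w)%:E|%E) ->
  cvg_prob0 P (fun n w =>
     excess (Thetahat (Fgan G D) Xs Zs Gamma Delta tau n w) (Theta0 f Gamma Delta)).
  move=> tau Hs Hfc Htau eps e0 eta et0.
  have [del d0 Hkey] := key HTn HTc Hfc e0.
  have A1 := Hs (del / 4) ltac:(lra) (eta / 2) ltac:(lra).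
  have A2 := Htau (del / 4) ltac:(lra) (eta / 2) ltac:(lra).
  move: A1 A2; apply: filterS2 => n a1 a2.
  have -> : eta%:E = (eta / 2 + eta / 2)%:E by congr EFin; lra.
  apply: (outer_union _ a1 a2).
  move=> w /= Hw.
  case: (leP (sup_dev (Fgan G D) Xs Zs f Gamma Delta n w) (del / 4)%:E) => hs; last by left.
  case: (leP `|(tau n w)%:E|%E (del / 4)%:E) => ht; last by right.
  exfalso; move: Hw; apply/negP; rewrite -leNgt.
  apply: (det_a1 HTn HTc Hfc (fh := fhat (Fgan G D) Xs Zs n w) Hkey hs).
    by move: ht; rewrite /= lee_fin => /normleP [_ ?].
  lra.
split.
- move=> tau Hs Hfc Htm Htpos Htau; split; first exact: partA1.
  move=> eps e0 eta et0; move: (Hs eps e0 eta et0); apply: filterS => n.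
  apply: outer_mono => w /=.
  case: (leP (sup_dev (Fgan G D) Xs Zs f Gamma Delta n w) eps%:E) => // hs h; exfalso.
  have := det_V HTn HTc Hfc (fh := fhat (Fgan G D) Xs Zs n w) hs.
  by move/(lt_le_trans h); rewrite ltxx.
- move=> tau Hs Hfc Hb Htm Htpos Htau Hrate.
  have Hb1 : cvg_prob0 P (fun n w =>
      excess (Theta0 f Gamma Delta) (Thetahat (Fgan G D) Xs Zs Gamma Delta tau n w)).
    move=> eps e0 eta et0.
    have [M HM] := Hb (eta / 2) ltac:(lra).
    pose M' := Num.max M 1.
    have M'1 : 1 <= M' by rewrite le_max lexx orbT.
    have MM' : M <= M' by rewrite le_max lexx.
    have pos : 0 < 1 / (2 * M') by apply: divr_gt0 => //; lra.
    have A2 := Hrate (1 / (2 * M')) pos (eta / 2) ltac:(lra).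
    have A3 := nbhs_infty_gt 0.
    move: A3 HM A2; apply: filterS3 => n n0 hM a2.
    have -> : eta%:E = (eta / 2 + eta / 2)%:E by congr EFin; lra.
    apply: (outer_union _ hM a2).
    move=> w /= Hw.
    case: (leP `|((Num.sqrt n%:R)%:E * sup_dev (Fgan G D) Xs Zs f Gamma Delta n w)%E|%E
              M%:E) => hy; last by left.
    case: (leP `|((Num.sqrt n%:R)^-1 / tau n w)%:E|%E (1 / (2 * M'))%:E) => hr;
      last by right.
    exfalso; move: Hw; apply/negP; rewrite -leNgt.
    have q0 : 0 < Num.sqrt (n%:R : R) by rewrite sqrtr_gt0 ltr0n.
    have s0 : (0 <= sup_dev (Fgan G D) Xs Zs f Gamma Delta n w)%E.
      case: HTn => t0 Tt0.
      apply: (@le_trans _ _ (`|fhat (Fgan G D) Xs Zs n w t0 - f t0|)%:E).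
        by rewrite lee_fin.
      by apply: ereal_sup_ubound; exists t0.
    have hs := aux_s _ _ _ _ _ q0 s0 MM' hy.
    have m0 : 0 < M' by lra.
    have hr' := aux_r _ _ _ _ (Htpos n w) m0 hr.
    have hb : (excess (Theta0 f Gamma Delta)
        (Thetahat (Fgan G D) Xs Zs Gamma Delta tau n w) <= 0%:E)%E :=
      det_b1 HTn HTc Hfc (fh := fhat (Fgan G D) Xs Zs n w) hs hr'.
    apply: le_trans hb _.
    by rewrite lee_fin ltW.
  split => //.
  move=> eps e0 eta et0.
  have A1 := partA1 tau Hs Hfc Htau eps e0 (eta / 2) ltac:(lra).
  have A2 := Hb1 eps e0 (eta / 2) ltac:(lra).
  move: A1 A2; apply: filterS2 => n a1 a2.
  have -> : eta%:E = (eta / 2 + eta / 2)%:E by congr EFin; lra.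
  apply: (outer_union _ a1 a2) => w /=.
  by rewrite /hausdorff lt_max => /orP[h|h]; [left|right].
Qed.
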